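(* Let $R=\bigoplus_{\alpha\in\Gamma}R_{\alpha}$ be a graded integral domain, let $T$ be a homogeneous overring of $R$, and let $\star$ (resp. $\star'$) be a semistar operation on $R$ (resp. on $T$). Then $T$ is a homogeneously $(\star,\star')$-linked overring of $R$ if and only if $\mathrm{NA}(R,\star)\subseteq\mathrm{NA}(T,\star')$.
   Context: $\Gamma$ is a commutative cancellative monoid (written additively) whose quotient group $\langle\Gamma\rangle$ is torsion-free. A graded integral domain $R=\bigoplus_{\alpha\in\Gamma}R_\alpha$ is an integral domain that is the direct sum of additive subgroups $R_\alpha$ with $R_\alpha R_\beta\subseteq R_{\alpha+\beta}$. $K$ is its quotient field, $H$ the set of nonzero homogeneous elements, $R_H=\bigoplus_{\alpha\in\langle\Gamma\rangle}(R_H)_\alpha$ the homogeneous quotient field. A homogeneous overring of $R$ is a ring $T$ with $R\subseteq T\subseteq R_H$ and $T=\bigoplus_{\alpha\in\langle\Gamma\rangle}(T\cap(R_H)_\alpha)$; it is a graded integral domain with $T_\alpha=T\cap(R_H)_\alpha$. For a graded domain $S$ (such as $R$ or $T$), $a\in S$, $C_S(a)$ is the ideal of $S$ generated by the homogeneous components of $a$, and for $f=f_0+\cdots+f_nX^n\in S[X]$, $A_f:=\sum_iC_S(f_i)$ (computed in $S$). A semistar operation on $S$ is a map $\star$ from the set of nonzero $S$-submodules of $K$ to itself such that for all $0\ne x\in K$ and $E,F$: $(xE)^\star=xE^\star$; $E\subseteq F\Rightarrow E^\star\subseteq F^\star$; $E\subseteq E^\star$; $(E^\star)^\star=E^\star$.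 $N(\star):=\{f\in S[X]: f\ne0,\ A_f^\star=S^\star\}$ and $\mathrm{NA}(S,\star):=S[X]_{N(\star)}$. $T$ is a homogeneously $(\star,\star')$-linked overring of $R$ if for each nonzero homogeneous finitely generated ideal $F$ of $R$, $F^\star=R^\star$ implies $(FT)^{\star'}=T^{\star'}$. *)

(* Defs.v *)
From HB Require Import structures.
From mathcomp Require Import all_boot all_order all_algebra fraction.
Set Implicit Arguments. Unset Strict Implicit. Unset Printing Implicit Defensive.
Import Order.TTheory GRing.Theory Num.Theory.
Local Open Scope ring_scope.

(* Everything lives inside a fixed field K (the quotient field of R).
   Subsets of K are predicates K -> Prop. The grading group G is the
   quotient group <Gamma>, and Gamma is a submonoid of G generating G. *)

Section Defs.
Variables (K : fieldType) (G : zmodType).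

Definition subring (S : K -> Prop) : Prop :=
  S 0 /\ S 1 /\ (forall x y, S x -> S y -> S (x - y)) /\
  (forall x y, S x -> S y -> S (x * y)).

Definition decomp (C : G -> K -> Prop) (x : K) (s : seq G) (f : G -> K) : Prop :=
  uniq s /\ (forall i, i \in s -> C i (f i)) /\ x = \sum_(i <- s) f i.

Definition hcomp (C : G -> K -> Prop) (x y : K) : Prop :=
  exists s f, decomp C x s f /\ exists2 j, j \in s & y = f j.

Definition homog (C : G -> K -> Prop) (x : K) : Prop :=
  x != 0 /\ exists a, C a x.

Definition graded_domain (Gam : G -> Prop) (R : K -> Prop) (Rc : G -> K -> Prop)
  : Prop :=
  [/\ Gam 0, (forall a b, Gam a -> Gam b -> Gam (a + b)),
      (forall g, exists a b, Gam a /\ Gam b /\ g = a - b) &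
      (forall (g : G) (n : nat), (0 < n)%N -> g *+ n = 0 -> g = 0)] /\
  subring R /\
  (forall z, exists a b, R a /\ R b /\ b != 0 /\ z = a / b) /\
  (forall a x, Rc a x -> R x) /\
  (forall a, Rc a 0 /\ forall x y, Rc a x -> Rc a y -> Rc a (x - y)) /\
  (forall a x, ~ Gam a -> Rc a x -> x = 0) /\
  (forall a b x y, Rc a x -> Rc b y -> Rc (a + b) (x * y)) /\
  (forall x, R x -> exists s f, decomp Rc x s f) /\
  (forall s f, decomp Rc 0 s f -> forall i, i \in s -> f i = 0).

Definition RHc (Rc : G -> K -> Prop) (a : G) (z : K) : Prop :=
  exists b c x y, Rc b x /\ Rc c y /\ y != 0 /\ a = b - c /\ z = x / y.

Definition RH (R : K -> Prop) (Rc : G -> K -> Prop) (z : K) : Prop :=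
  exists x y, R x /\ homog Rc y /\ z = x / y.

Definition Tc (Rc : G -> K -> Prop) (T : K -> Prop) (a : G) (z : K) : Prop :=
  T z /\ RHc Rc a z.

Definition homog_overring (R : K -> Prop) (Rc : G -> K -> Prop) (T : K -> Prop)
  : Prop :=
  subring T /\ (forall x, R x -> T x) /\ (forall x, T x -> RH R Rc x) /\
  (forall t, T t -> exists s f, decomp (Tc Rc T) t s f).

Definition gen (S X : K -> Prop) (z : K) : Prop :=
  exists n (r x : 'I_n -> K),
    (forall j, S (r j) /\ X (x j)) /\ z = \sum_(j < n) r j * x j.

Definition submod (S E : K -> Prop) : Prop :=
  E 0 /\ (forall x y, E x -> E y -> E (x + y)) /\
  (forall r x, S r -> E x -> E (r * x)).

Definition nz_submod (S E : K -> Prop) : Prop :=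
  submod S E /\ exists x, E x /\ x != 0.

Definition scale (x : K) (E : K -> Prop) (z : K) : Prop :=
  exists e, E e /\ z = x * e.

Definition subset (E F : K -> Prop) : Prop := forall z, E z -> F z.

(* star is a semistar operation on S (only its values on nonzero
   S-submodules of K are relevant) *)
Definition semistar (S : K -> Prop) (star : (K -> Prop) -> (K -> Prop)) : Prop :=
  forall E, nz_submod S E ->
   [/\ nz_submod S (star E),
       (forall x, x != 0 -> star (scale x E) = scale x (star E)),
       (forall F, nz_submod S F -> subset E F -> subset (star E) (star F)),
       subset E (star E) &
       star (star E) = star E].

Definition Af (S : K -> Prop) (Sc : G -> K -> Prop) (f : {poly K}) : K -> Prop :=
  gen S (fun y => exists i, hcomp Sc f`_i y).

Definition polyin (S : K -> Prop) (f : {poly K}) : Prop := forall i, S f`_i.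

Definition Nstar (S : K -> Prop) (Sc : G -> K -> Prop)
  (star : (K -> Prop) -> (K -> Prop)) (f : {poly K}) : Prop :=
  polyin S f /\ f != 0 /\ star (Af S Sc f) = star S.

Definition NA (S : K -> Prop) (Sc : G -> K -> Prop)
  (star : (K -> Prop) -> (K -> Prop)) (z : {fraction {poly K}}) : Prop :=
  exists g f, polyin S g /\ Nstar S Sc star f /\ z = tofrac g / tofrac f.

Definition is_ideal (S F : K -> Prop) : Prop :=
  (forall x, F x -> S x) /\ submod S F.

Definition nz_homog_fg_ideal (R : K -> Prop) (Rc : G -> K -> Prop) (F : K -> Prop)
  : Prop :=
  is_ideal R F /\ (exists x, F x /\ x != 0) /\
  (forall x y, F x -> hcomp Rc x y -> F y) /\
  (exists s : seq K, F = gen R (fun x => x \in s)).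

Definition homog_linked (R : K -> Prop) (Rc : G -> K -> Prop) (T : K -> Prop)
  (star star' : (K -> Prop) -> (K -> Prop)) : Prop :=
  forall F, nz_homog_fg_ideal R Rc F -> star F = star R ->
    star' (gen T F) = star' T.

End Defs.

(* Main.v *)
Require Import Defs.
From mathcomp Require Import all_boot all_order all_algebra fraction.
From mathcomp Require Import ring.
From Stdlib Require Import FunctionalExtensionality PropExtensionality.
Set Implicit Arguments. Unset Strict Implicit. Unset Printing Implicit Defensive.
Import Order.TTheory GRing.Theory Num.Theory.
Local Open Scope ring_scope.
Lemma gen_submod (K : fieldType) (S X : K -> Prop) :
  subring S -> submod S (gen S X).
Proof.
move=> [S0 [S1 [SB SM]]].
have SD : forall x y, S x -> S y -> S (x + y).
  move=> x y Sx Sy; have -> : x + y = x - (0 - y) by rewrite sub0r opprK.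
  exact: (SB _ _ Sx (SB _ _ S0 Sy)).
split; first by exists 0%N, (fun _ => 0), (fun _ => 0); split => [[]|]; rewrite ?big_ord0.
split.
  move=> x y [n1 [r1 [x1 [H1 ->]]]] [n2 [r2 [x2 [H2 ->]]]].
  exists (n1 + n2)%N, (fun j => match split j with inl a => r1 a | inr b => r2 b end),
    (fun j => match split j with inl a => x1 a | inr b => x2 b end).
  split; first by move=> j; case: (split j) => a; [exact: H1|exact: H2].
  rewrite big_split_ord /=; congr (_ + _); apply: eq_bigr => i _.
    by have /= -> := unsplitK (inl i : 'I_n1 + 'I_n2).
  by have /= -> := unsplitK (inr i : 'I_n1 + 'I_n2).
move=> r x Sr [n [r1 [x1 [H1 ->]]]].
exists n, (fun j => r * r1 j), x1; split.
  by move=> j; have [? ?] := H1 j; split => //; apply: SM.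
by rewrite mulr_sumr; apply: eq_bigr => i _; rewrite mulrA.
Qed.

Lemma gen_incl (K : fieldType) (S X : K -> Prop) x :
  subring S -> X x -> gen S X x.
Proof.
move=> [_ [S1 _]] Xx; exists 1%N, (fun _ => 1), (fun _ => x); split => //.
by rewrite big_ord1 mul1r.
Qed.

Lemma submod_sum (K : fieldType) (S E : K -> Prop) (I : Type) (r : seq I) (P : pred I) (F : I -> K) :
  submod S E -> (forall i, P i -> E (F i)) -> E (\sum_(i <- r | P i) F i).
Proof.
move=> [E0 [ED _]] HF; exact: (big_ind E E0 ED).
Qed.

Lemma gen_sub (K : fieldType) (S X E : K -> Prop) :
  submod S E -> (forall x, X x -> E x) -> Defs.subset (gen S X) E.
Proof.
move=> hE HX z [n [r [x [H ->]]]]; apply: (submod_sum (S:=S)) => // i _.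
have [Sr Xx] := H i; have [_ [_ EM]] := hE; exact: EM (HX _ Xx).
Qed.
Lemma sum_pred1_seq (T : eqType) (V : nmodType) (r : seq T) i (F : T -> V) :
  uniq r -> i \in r -> \sum_(j <- r | j == i) F j = F i.
Proof.
move=> ur ir; rewrite (big_rem i) //= eqxx big1_seq ?addr0 //.
by move=> j /andP[/eqP -> ]; rewrite mem_rem_uniqF.
Qed.

Lemma group_decomp (K : fieldType) (G : zmodType) (C : G -> K -> Prop) (L : seq (G * K)) :
  (forall a, C a 0) -> (forall a x y, C a x -> C a y -> C a (x + y)) ->
  (forall p, p \in L -> C p.1 p.2) ->
  decomp C (\sum_(p <- L) p.2) (undup (map fst L))
    (fun d => \sum_(p <- L | p.1 == d) p.2).
Proof.
move=> C0 CD HL; split; first exact: undup_uniq.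
split.
  move=> d _; rewrite big_seq_cond; apply: (big_ind (C d)); [exact: C0|exact: CD|].
  by move=> p /andP[pL /eqP <-]; exact: HL.
rewrite (exchange_big_dep xpredT) //=; apply: eq_big_seq => p pL.
rewrite (eq_bigl (fun d => d == p.1)); last by move=> d; rewrite eq_sym.
rewrite sum_pred1_seq // ?undup_uniq // mem_undup; exact: map_f.
Qed.
Definition RcB_ax (K : fieldType) (G : zmodType) (Rc : G -> K -> Prop) :=
  forall a, Rc a 0 /\ forall x y, Rc a x -> Rc a y -> Rc a (x - y).
Definition RcM_ax (K : fieldType) (G : zmodType) (Rc : G -> K -> Prop) :=
  forall a b x y, Rc a x -> Rc b y -> Rc (a + b) (x * y).

Lemma RHc0 (K : fieldType) (G : zmodType) (Rc : G -> K -> Prop) e w a :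
  RcB_ax Rc -> Rc e w -> w != 0 -> RHc Rc a 0.
Proof.
move=> hB Rw w0; exists (a + e), e, 0, w; split; first by case: (hB (a + e)).
by rewrite addrK mul0r.
Qed.

Lemma RHcB (K : fieldType) (G : zmodType) (Rc : G -> K -> Prop) a z1 z2 :
  RcB_ax Rc -> RcM_ax Rc -> RHc Rc a z1 -> RHc Rc a z2 -> RHc Rc a (z1 - z2).
Proof.
move=> hB hM [b1 [c1 [x1 [y1 [R1 [S1 [y10 [-> ->]]]]]]]]
  [b2 [c2 [x2 [y2 [R2 [S2 [y20 [E ->]]]]]]]].
exists (b1 + c2), (c1 + c2), (x1 * y2 - x2 * y1), (y1 * y2).
split.
  have [_ hB'] := hB (b1 + c2); apply: hB'; first exact: hM.
  have -> : b1 + c2 = b2 + c1.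
    have -> : b2 = b1 - c1 + c2 by rewrite E subrK.
    by rewrite addrAC subrK addrC.
  exact: hM.
split; first exact: hM.
split; first by rewrite mulf_neq0.
split; first by rewrite opprD addrACA subrr addr0.
by field; rewrite y10 y20.
Qed.

Lemma RHcM (K : fieldType) (G : zmodType) (Rc : G -> K -> Prop) a a' z1 z2 :
  RcM_ax Rc -> RHc Rc a z1 -> RHc Rc a' z2 -> RHc Rc (a + a') (z1 * z2).
Proof.
move=> hM [b1 [c1 [x1 [y1 [R1 [S1 [y10 [-> ->]]]]]]]]
  [b2 [c2 [x2 [y2 [R2 [S2 [y20 [-> ->]]]]]]]].
exists (b1 + b2), (c1 + c2), (x1 * x2), (y1 * y2).
split; first exact: hM.
split; first exact: hM.
split; first by rewrite mulf_neq0.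
split; first by rewrite opprD addrACA.
by field; rewrite y10 y20.
Qed.

Lemma Rc_RHc (K : fieldType) (G : zmodType) (Rc : G -> K -> Prop) e w a x :
  RcM_ax Rc -> Rc e w -> w != 0 -> Rc a x -> RHc Rc a x.
Proof.
move=> hM Rw w0 Rx; exists (a + e), e, (x * w), w.
split; first exact: hM.
by split=> //; split=> //; split; [rewrite addrK | rewrite mulfK].
Qed.

Lemma RHcD (K : fieldType) (G : zmodType) (Rc : G -> K -> Prop) e w a z1 z2 :
  RcB_ax Rc -> RcM_ax Rc -> Rc e w -> w != 0 ->
  RHc Rc a z1 -> RHc Rc a z2 -> RHc Rc a (z1 + z2).
Proof.
move=> hB hM Rw w0 h1 h2; have -> : z1 + z2 = z1 - (0 - z2) by rewrite sub0r opprK.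
apply: RHcB => //; apply: RHcB => //; exact: (RHc0 a hB Rw w0).
Qed.

Lemma common_denom (K : fieldType) (G : zmodType) (Rc : G -> K -> Prop) e w
  (s : seq G) (f : G -> K) :
  RcM_ax Rc -> Rc e w -> w != 0 ->
  (forall i, i \in s -> RHc Rc i (f i)) ->
  exists Y c, [/\ Rc c Y, Y != 0 & forall i, i \in s -> Rc (i + c) (f i * Y)].
Proof.
move=> hM Rw w0; elim: s => [|i s IH] H.
  by exists w, e; split.
have [|Y [c [RY Y0 HY]]] := IH.
  by move=> j js; apply: H; rewrite in_cons js orbT.
have [b [c' [x [y [Rx [Ry [y0 [Ei Efi]]]]]]]] := H i (mem_head _ _).
exists (Y * y), (c + c'); split; first exact: hM.
  by rewrite mulf_neq0.
move=> k; rewrite in_cons => /orP[/eqP -> | ks].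
  have -> : f i * (Y * y) = x * Y by rewrite Efi mulrA mulrAC divfK.
  have -> : i + (c + c') = b + c.
    by rewrite Ei [c + c']addrC addrA subrK.
  exact: hM.
rewrite mulrA addrA; exact: hM (HY k ks) Ry.
Qed.

Lemma RHc_zero (K : fieldType) (G : zmodType) (Rc : G -> K -> Prop) e w
  (s : seq G) (f : G -> K) :
  RcM_ax Rc -> Rc e w -> w != 0 ->
  (forall s f, decomp Rc 0 s f -> forall i, i \in s -> f i = 0) ->
  decomp (RHc Rc) 0 s f -> forall i, i \in s -> f i = 0.
Proof.
move=> hM Rw w0 hU [us [Hs E]].
have [Y [c [RY Y0 HY]]] := common_denom hM Rw w0 Hs.
have D : decomp Rc 0 (map (fun i => i + c) s) (fun d => f (d - c) * Y).
  split; first by rewrite map_inj_uniq // => x y; exact: addIr.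
  split.
    by move=> d /mapP[i iS ->]; rewrite addrK; exact: HY.
  rewrite big_map -mulr_suml; under eq_bigr do rewrite addrK.
  by rewrite -E mul0r.
move=> i iS; have := hU _ _ D (i + c) (map_f _ iS).
by rewrite addrK => /eqP; rewrite mulf_eq0 (negbTE Y0) orbF => /eqP.
Qed.

Definition HS (K : fieldType) (G : zmodType) (C : G -> K -> Prop) (P : K -> Prop) (x : K) :=
  exists L : seq (G * K), (forall p, p \in L -> C p.1 p.2 /\ P p.2) /\ x = \sum_(p <- L) p.2.

Definition RcU_ax (K : fieldType) (G : zmodType) (Rc : G -> K -> Prop) :=
  forall s f, decomp Rc 0 s f -> forall i, i \in s -> f i = 0.

Lemma HS_hcomp (K : fieldType) (G : zmodType) (Rc : G -> K -> Prop) e w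
  (C : G -> K -> Prop) (P : K -> Prop) x y :
  RcB_ax Rc -> RcM_ax Rc -> Rc e w -> w != 0 -> RcU_ax Rc ->
  (forall a z, C a z -> RHc Rc a z) -> P 0 -> (forall u v, P u -> P v -> P (u + v)) ->
  HS (RHc Rc) P x -> hcomp C x y -> P y.
Proof.
move=> hB hM Rw w0 hU hC P0 PD [L [HL ->]] [s [f [[us [Hs E]] [j js ->]]]].
pose L' := L ++ map (fun i => (i, - f i)) s.
have HL' : forall p, p \in L' -> RHc Rc p.1 p.2.
  move=> p; rewrite mem_cat => /orP[/HL [] // | /mapP[i iS ->] /=].
  rewrite -sub0r; apply: RHcB => //; first exact: (RHc0 i hB Rw w0).
  exact: hC (Hs i iS).
have D := group_decomp (fun a => RHc0 a hB Rw w0)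
   (fun a x y => @RHcD _ _ Rc e w a x y hB hM Rw w0) HL'.
have S0 : \sum_(p <- L') p.2 = 0.
  by rewrite big_cat big_map /= sumrN E subrr.
rewrite S0 in D.
have jL : j \in undup (map fst L').
  by rewrite mem_undup map_cat mem_cat -map_comp; apply/orP; right; rewrite map_id_in // => ?.
have := RHc_zero hM Rw w0 hU D jL.
rewrite big_cat big_map /= sum_pred1_seq // => /eqP; rewrite subr_eq0 => /eqP <-.
rewrite big_seq_cond; apply: (big_ind P P0 PD).
by move=> p /andP[/HL [] //].
Qed.
Lemma HS_decomp (K : fieldType) (G : zmodType) (C C' : G -> K -> Prop) (P : K -> Prop) x s f :
  (forall a z, C' a z -> C a z) -> (forall i, i \in s -> P (f i)) ->
  decomp C' x s f -> HS C P x.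
Proof.
move=> hC hP [_ [Hs ->]]; exists (map (fun i => (i, f i)) s); split.
  by move=> p /mapP[i iS ->] /=; split; [exact: hC (Hs i iS) | exact: hP].
by rewrite big_map.
Qed.

Lemma HS0 (K : fieldType) (G : zmodType) (C : G -> K -> Prop) (P : K -> Prop) :
  HS C P 0.
Proof. by exists [::]; split => //; rewrite big_nil. Qed.

Lemma HSD (K : fieldType) (G : zmodType) (C : G -> K -> Prop) (P : K -> Prop) x y :
  HS C P x -> HS C P y -> HS C P (x + y).
Proof.
move=> [L1 [H1 ->]] [L2 [H2 ->]]; exists (L1 ++ L2); split; last by rewrite big_cat.
by move=> p; rewrite mem_cat => /orP[/H1|/H2].
Qed.

Lemma HS_sum (K : fieldType) (G : zmodType) (C : G -> K -> Prop) (P : K -> Prop)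
  (I : Type) (r : seq I) (F : I -> K) :
  (forall i, HS C P (F i)) -> HS C P (\sum_(i <- r) F i).
Proof.
move=> H; apply: (big_ind (HS C P)); [exact: HS0 | exact: HSD | move=> i _; exact: H].
Qed.

Lemma HS_mul (K : fieldType) (G : zmodType) (C : G -> K -> Prop) (P Q P' : K -> Prop) x y :
  (forall a b u v, C a u -> C b v -> C (a + b) (u * v)) ->
  (forall u v, P u -> Q v -> P' (u * v)) ->
  HS C P x -> HS C Q y -> HS C P' (x * y).
Proof.
move=> hC hP [L1 [H1 ->]] [L2 [H2 ->]].
exists [seq (p.1 + q.1, p.2 * q.2) | p <- L1, q <- L2]; split.
  move=> pq /allpairsP[[p q] [/= pL qL ->]] /=.
  have [Cp Pp] := H1 p pL; have [Cq Qq] := H2 q qL.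
  by split; [exact: hC | exact: hP].
rewrite big_allpairs_dep /= mulr_suml; apply: eq_bigr => p _.
by rewrite mulr_sumr.
Qed.

Lemma decomp_nz (K : fieldType) (G : zmodType) (C : G -> K -> Prop) x s f :
  decomp C x s f -> x != 0 -> exists j, [/\ j \in s, f j != 0 & hcomp C x (f j)].
Proof.
move=> D; have [us [Hs E]] := D.
case: (boolP (all (fun j => f j == 0) s)) => [/allP A | ].
  by rewrite E big1_seq ?eqxx // => i /andP[_ /A /eqP].
rewrite -has_predC => /hasP[j js /= fj] _; exists j; split => //.
by exists s, f; split => //; exists j.
Qed.

Lemma submod_weaken (K : fieldType) (R T E : K -> Prop) :
  (forall r, R r -> T r) -> submod T E -> submod R E.
Proof. by move=> RT [E0 [ED EM]]; split => //; split => // r x /RT; exact: EM. Qed.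

Lemma submod_self (K : fieldType) (S : K -> Prop) : subring S -> submod S S.
Proof.
move=> [S0 [S1 [SB SM]]]; split => //; split => //.
move=> x y Sx Sy; have -> : x + y = x - (0 - y) by rewrite sub0r opprK.
exact: (SB _ _ Sx (SB _ _ S0 Sy)).
Qed.
Lemma pred_ext (K : Type) (P Q : K -> Prop) :
  (forall z, P z -> Q z) -> (forall z, Q z -> P z) -> P = Q.
Proof.
move=> h1 h2; apply: functional_extensionality => z.
by apply: propositional_extensionality; split; [exact: h1 | exact: h2].
Qed.

Lemma HS_mono (K : fieldType) (G : zmodType) (C : G -> K -> Prop) (P P' : K -> Prop) x :
  (forall u, P u -> P' u) -> HS C P x -> HS C P' x.
Proof.
move=> hP [L [HL ->]]; exists L; split => // p pL; have [? ?] := HL p pL; split => //.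
exact: hP.
Qed.

Lemma HS_single (K : fieldType) (G : zmodType) (C : G -> K -> Prop) (P : K -> Prop) a x :
  C a x -> P x -> HS C P x.
Proof.
move=> Cx Px; exists [:: (a, x)]; split; last by rewrite big_seq1.
by move=> p; rewrite inE => /eqP -> /=.
Qed.

Lemma hcomp_deg (K : fieldType) (G : zmodType) (C : G -> K -> Prop) x y :
  hcomp C x y -> exists a, C a y.
Proof. by move=> [s [f [[_ [Hs _]] [j js ->]]]]; exists j; exact: Hs. Qed.

Lemma HS_dec (K : fieldType) (G : zmodType) (C C' : G -> K -> Prop) x :
  (forall a z, C' a z -> C a z) ->
  (exists s f, decomp C' x s f) -> HS C (fun y => hcomp C' x y) x.
Proof.
move=> hC [s [f D]]; apply: (HS_decomp hC _ D) => i iS.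
by exists s, f; split => //; exists i.
Qed.
Lemma frac_eq (K : fieldType) (f g h : {poly K}) :
  f != 0 -> h != 0 -> tofrac 1 / tofrac f = tofrac g / tofrac h -> h = g * f.
Proof.
move=> f0 h0 E.
have Ff0 : tofrac f != 0 by rewrite tofrac_eq0.
have Fh0 : tofrac h != 0 by rewrite tofrac_eq0.
have E2 : tofrac 1 * tofrac h = tofrac g * tofrac f.
  by apply/eqP; rewrite -(eqr_div _ _ Ff0 Fh0) E.
by apply/eqP; rewrite -tofrac_eq tofracM -E2 tofrac1 mul1r.
Qed.

Theorem lemma2p8 (K : fieldType) (G : zmodType) (Gam : G -> Prop)
  (R : K -> Prop) (Rc : G -> K -> Prop) (T : K -> Prop)
  (star star' : (K -> Prop) -> (K -> Prop)) :
  graded_domain Gam R Rc ->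
  homog_overring R Rc T ->
  semistar R star ->
  semistar T star' ->
  (homog_linked R Rc T star star' <->
   (forall z, NA R Rc star z -> NA T (Tc Rc T) star' z)).
Proof.
move=> [_ [sR [_ [RcR [hB [_ [hM [Rdec hU]]]]]]]] [sT [RT [_ Tdec]]] sstar sstar'.
have [e [w [Rw w0]]] : exists e w, Rc e w /\ w != 0.
  have [s [f D]] := Rdec 1 (proj1 (proj2 sR)).
  have [j [js fj _]] := decomp_nz D (oner_neq0 _).
  exists j, (f j); split => //; case: D => _ [Hs _]; exact: Hs.
have hRHcR : forall a x, Rc a x -> RHc Rc a x := fun a x => Rc_RHc hM Rw w0.
have hTcR : forall a x, Rc a x -> Tc Rc T a x.
  by move=> a x Rx; split; [apply: RT; exact: RcR Rx | exact: hRHcR].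
have hTcRH : forall a x, Tc Rc T a x -> RHc Rc a x by move=> a x [].
have hcompRT : forall x y, hcomp Rc x y -> hcomp (Tc Rc T) x y.
  move=> x y [s [f [[us [Hs E]] H]]]; exists s, f; split => //; split => //; split => //.
  by move=> i iS; apply: hTcR; exact: Hs.
have hcompR : forall x y, hcomp Rc x y -> R y.
  by move=> x y /hcomp_deg [a Ra]; exact: RcR Ra.
have hcompT : forall x y, hcomp (Tc Rc T) x y -> T y.
  by move=> x y /hcomp_deg [a [Ta _]].
have HSkey := fun C P x y => @HS_hcomp K G Rc e w C P x y hB hM Rw w0 hU.
have RHcMul : forall a b u v, RHc Rc a u -> RHc Rc b v -> RHc Rc (a + b) (u * v).
  by move=> a b u v; exact: RHcM.
have HS_R : forall r, R r -> HS (RHc Rc) (fun y => hcomp Rc r y) r.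
  by move=> r Rr; apply: HS_dec hRHcR (Rdec r Rr).
have HS_T : forall t, T t -> HS (RHc Rc) (fun y => hcomp (Tc Rc T) t y) t.
  by move=> t Tt; apply: HS_dec hTcRH (Tdec t Tt).
have [S0 [S1 _]] := sR.
have [T0 [T1 _]] := sT.
split.
- move=> hlink z [g [f [Rg [[Rf [f0 Sf]] ->]]]].
  exists g, f; split; first by move=> i; apply: RT.
  split; last by [].
  split; first by move=> i; apply: RT.
  split; first by [].
  set F := Af R Rc f.
  have Fsub : submod R F := gen_submod _ sR.
  have [F0 [FD FM]] := Fsub.
  have [GT0 [GTD GTM]] := gen_submod F sT.
  have FR : forall x, F x -> R x.
    apply: (gen_sub (submod_self sR)) => y [i hy]; exact: hcompR hy.
  have EqA : Af T (Tc Rc T) f = gen T F.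
    apply: pred_ext.
      apply: (gen_sub (gen_submod _ sT)) => y [i hy].
      apply: (HSkey (Tc Rc T) (gen T F) (f`_i) y hTcRH GT0 GTD _ hy).
      apply: HS_mono (HS_R _ (Rf i)) => u hu.
      by apply: gen_incl sT _; apply: gen_incl sR _; exists i.
    apply: (gen_sub (gen_submod _ sT)) => x Fx.
    apply: (gen_sub (submod_weaken RT (gen_submod _ sT))) Fx => y [i hy].
    by apply: gen_incl sT _; exists i; exact: hcompRT.
  rewrite EqA; apply: hlink => //.
  split; first by split.
  split.
    have lf : lead_coef f != 0 by rewrite lead_coef_eq0.
    have [s [h D]] := Rdec _ (Rf (size f).-1).
    have [j [_ hj hc]] := decomp_nz D lf.
    exists (h j); split => //; apply: gen_incl sR _; by exists (size f).-1.
  split.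
    move=> x y Fx hy.
    apply: (HSkey Rc F x y hRHcR F0 FD _ hy).
    case: Fx => n [r [xs [Hrx ->]]].
    apply: HS_sum => j; have [Rr Xx] := Hrx j.
    apply: (HS_mul (P := R) (Q := fun v => exists i, hcomp Rc f`_i v)) RHcMul _ _ _.
    + by move=> u v Ru Xv; apply: FM Ru _; apply: gen_incl sR _.
    + by apply: HS_mono (HS_R _ Rr) => u; exact: hcompR.
    + have [i hx] := Xx; have [a Ra] := hcomp_deg hx.
      by apply: (HS_single (a := a)); [exact: hRHcR | exists i].
  have fg : forall n, exists s : seq K, (forall x, x \in s -> F x) /\
      forall i, (i < n)%N -> forall y, hcomp Rc f`_i y -> gen R (fun x => x \in s) y.
    elim => [|n [s [Hs1 Hs2]]]; first by exists [::].
    have [sg [h D]] := Rdec _ (Rf n).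
    have [G0' [GD' _]] := gen_submod (fun x => x \in s ++ map h sg) sR.
    exists (s ++ map h sg); split.
      move=> x; rewrite mem_cat => /orP[/Hs1 // | /mapP[i isg ->]].
      by apply: gen_incl sR _; exists n; exists sg, h; split => //; exists i.
    move=> i; rewrite ltnS leq_eqVlt => /orP[/eqP -> | lt] y hy.
      apply: (HSkey Rc _ _ _ hRHcR G0' GD' _ hy).
      apply: (HS_decomp hRHcR _ D) => j jsg.
      by apply: gen_incl sR _; rewrite mem_cat map_f ?orbT.
    apply: (gen_sub (gen_submod _ sR)) (Hs2 i lt y hy) => x xs.
    by apply: gen_incl sR _; rewrite mem_cat xs.
  have [s [Hs1 Hs2]] := fg (size f).
  exists s; apply: pred_ext.
    apply: (gen_sub (gen_submod _ sR)) => y [i hy].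
    case: (ltnP i (size f)) => hi; first exact: Hs2 hy.
    have fi0 : f`_i = 0 by rewrite nth_default.
    rewrite fi0 in hy.
    have -> : y = 0.
      apply: (HSkey Rc (fun y => y = 0) 0 y hRHcR erefl _ (HS0 _ _) hy).
      by move=> u v -> ->; rewrite addr0.
    by have [? _] := gen_submod (fun x => x \in s) sR.
  by apply: (gen_sub Fsub) => x xs; exact: Hs1.
move=> hNA F [[FR Fsub] [[x0 [Fx0 x0n]] [Fh [s Fs]]]] SF.
have [F0 [FD FM]] := Fsub.
have [GT0 [GTD GTM]] := gen_submod F sT.
pose f := Poly s.
have fc : forall i, f`_i = nth 0 s i by move=> i; rewrite coef_Poly.
have sF : forall x, x \in s -> F x by move=> x xs; rewrite Fs; exact: gen_incl.
have Ff : forall i, F f`_i.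
  move=> i; rewrite fc; case: (ltnP i (size s)) => hi.
    by apply: sF; exact: mem_nth.
  by rewrite nth_default.
have Rf : polyin R f by move=> i; exact: FR (Ff i).
have f0 : f != 0.
  apply/negP => /eqP f0; move/negP: x0n; apply; apply/eqP.
  have s0 : forall x, x \in s -> x = 0.
    by move=> x xs; rewrite -(nth_index 0 xs) -fc f0 coef0.
  have sub0 : submod R (fun z : K => z = 0).
    split => //; split; first by move=> ? ? -> ->; rewrite addr0.
    by move=> ? ? _ ->; rewrite mulr0.
  by move: Fx0; rewrite Fs; apply: (gen_sub sub0).
have EqF : Af R Rc f = F.
  apply: pred_ext.
    by apply: (gen_sub Fsub) => y [i hy]; exact: Fh (Ff i) hy.
  move=> z; rewrite {1}Fs; apply: (gen_sub (gen_submod _ sR)) => x xs.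
  have [sg [h D]] := Rdec x (FR _ (sF x xs)).
  have [_ [Hsg Ex]] := D.
  rewrite Ex big_seq /Af; apply: (@submod_sum _ R) => [|i isg]; first exact: gen_submod.
  apply: gen_incl sR _; exists (index x s); rewrite fc nth_index //.
  by exists sg, h; split => //; exists i.
have Nf : Nstar R Rc star f by split => //; split => //; rewrite EqF.
have NA1 : NA R Rc star (tofrac 1 / tofrac f).
  exists 1, f; split; last by split.
  by move=> i; rewrite coef1; case: (i == 0%N).
have [g [h [Tg [[Th [h0 Sh]] E]]]] := hNA _ NA1.
have Eh : h = g * f by apply: frac_eq.
have Asub : forall z, Af T (Tc Rc T) h z -> gen T F z.
  apply: (gen_sub (gen_submod _ sT)) => y [k hy].
  apply: (HSkey (Tc Rc T) (gen T F) _ y hTcRH GT0 GTD _ hy).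
  rewrite Eh coefM; apply: HS_sum => j.
  apply: (HS_mul (P := T) (Q := F)) RHcMul _ _ _.
  + by move=> u v Tu Fv; apply: GTM Tu _; apply: gen_incl sT _.
  + by apply: HS_mono (HS_T _ (Tg j)) => u; exact: hcompT.
  + by apply: HS_mono (HS_R _ (Rf _)) => u; exact: Fh (Ff _).
have nzT : nz_submod T T.
  by split; [exact: submod_self | exists 1; split => //; exact: oner_neq0].
have nzG : nz_submod T (gen T F).
  by split; [exact: gen_submod | exists x0; split => //; exact: gen_incl].
have nzA : nz_submod T (Af T (Tc Rc T) h).
  split; first exact: gen_submod.
  have lh : lead_coef h != 0 by rewrite lead_coef_eq0.
  have [sg [u D]] := Tdec _ (Th (size h).-1).
  have [j [_ uj hc]] := decomp_nz D lh.
  exists (u j); split => //; apply: gen_incl sT _; by exists (size h).-1.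
have GsubT : Defs.subset (gen T F) T.
  apply: (gen_sub (submod_self sT)) => x Fx; exact: RT (FR _ Fx).
apply: pred_ext => z.
  by have [_ _ mono _ _] := sstar' _ nzG; exact: mono T nzT GsubT z.
rewrite -Sh => hz.
by have [_ _ mono _ _] := sstar' _ nzA; exact: mono _ nzG Asub z hz.
Qed.
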